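(* Let $(X_i)_{i\in\mathbb{Z}}$ be a stationary standard semicircular sequence with covariance function $\rho$ in a $\ast$-probability space $(\mathcal{A},\phi)$, with $\rho(t)\to0$ as $|t|\to\infty$. Let $U(x)=\sum_{n=1}^{K}c_nU_n(x)$ be a real polynomial (finite Chebyshev expansion, $c_0=0$) with Chebyshev rank $k_\ast$, and let $\rho_U(t)=\phi(U(X_0)U(X_t))$. Then $$\rho_U(t)=\sum_{k=k_\ast}^{K}c_k^2\,\rho(t)^k\quad(t\in\mathbb{Z}),$$ and $$\sum_{n\in\mathbb{Z}}|\rho_U(n)|<\infty\iff\sum_{n\in\mathbb{Z}}|\rho(n)|^{k_\ast}<\infty.$$ *)

(* Defs.v *)
From HB Require Import structures.
From mathcomp Require Import all_boot all_order all_algebra.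
Set Implicit Arguments. Unset Strict Implicit. Unset Printing Implicit Defensive.
Import Order.TTheory GRing.Theory Num.Theory.
Local Open Scope ring_scope.

Section Defs.
Variable C : numClosedFieldType.

Definition star_prob_space (A : lalgType C) (star : A -> A) (phi : A -> C) : Prop :=
  [/\ (forall a x y, star (a *: x + y) = Num.conj a *: star x + star y),
      (forall x y, star (x * y) = star y * star x),
      (forall x, star (star x) = x),
      star 1 = 1 &
   [/\ (forall a x y, phi (a *: x + y) = a * phi x + phi y),
       phi 1 = 1,
       (forall x, phi (star x) = Num.conj (phi x)) &
       (forall x, 0 <= phi (star x * x))]].

(* Free Wick formula: sum over non-crossing pair partitions of the positions of s
   of the product over pairs (a<b) of rho (s_b - s_a); computed by the standard
   recursion on the partner j of the first element (with fuel n). *)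
Fixpoint wick_rec (n : nat) (rho : int -> C) (s : seq int) : C :=
  match n with
  | 0%N => (s == [::])%:R
  | n'.+1 =>
    match s with
    | [::] => 1
    | x :: t => \sum_(j < size t | ~~ odd j)
                  rho (nth 0 t j - x) * wick_rec n' rho (take j t)
                    * wick_rec n' rho (drop j.+1 t)
    end
  end.
Definition wick (rho : int -> C) (s : seq int) : C := wick_rec (size s) rho s.

Definition stationary_std_semicircular (A : lalgType C) (star : A -> A)
    (phi : A -> C) (X : int -> A) (rho : int -> C) : Prop :=
  [/\ forall i, star (X i) = X i,
      rho 0 = 1 &
      forall s : seq int, phi (\prod_(i <- s) X i) = wick rho s].

Fixpoint chebU_pair (n : nat) : {poly C} * {poly C} :=
  match n with
  | 0%N => (1, 'X)
  | n'.+1 => let: (a, b) := chebU_pair n' in (b, 'X * b - a)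
  end.
Definition chebU (n : nat) : {poly C} := (chebU_pair n).1.

Definition peval (A : lalgType C) (p : {poly C}) (x : A) : A :=
  \sum_(i < size p) p`_i *: x ^+ i.

Definition vanishes_at_infty (f : int -> C) : Prop :=
  forall eps : C, 0 < eps -> exists N : nat, forall t : int, (N < `|t|)%N -> `|f t| < eps.

Definition abs_summable_Z (f : int -> C) : Prop :=
  exists M : C, forall N : nat,
    \sum_(i < (N.*2).+1) `|f (i%:Z - N%:Z)| <= M.

End Defs.

(* Main.v *)
Require Import Defs.
From HB Require Import structures.
From mathcomp Require Import all_boot all_order all_algebra.
From mathcomp Require Import zify ring.
Import Order.TTheory GRing.Theory Num.Theory.
Local Open Scope ring_scope.

Section Wick.
Variable C : numClosedFieldType.
Variable rho : int -> C.

Lemma wick_rec_odd n s : odd (size s) -> wick_rec n rho s = 0.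
Proof.
elim: n s => [|n IH] [|x t] //=.
move=> Ht; apply: big1 => j Hj.
rewrite (IH (drop j.+1 t)) ?mulr0 // size_drop.
have jt := ltn_ord j.
rewrite oddB // oddS.
by move: Hj Ht; case: (odd j); case: (odd (size t)).
Qed.

Lemma wick_rec_fuel n m s : (size s <= n)%N -> (size s <= m)%N ->
  wick_rec n rho s = wick_rec m rho s.
Proof.
elim: n m s => [|n IH] m [|x t] //=; first by case: m.
  by case: m.
case: m => [|m] //= Hn Hm.
apply: eq_bigr => j _.
have jt := ltn_ord j.
rewrite (IH m (take j t)); last 2 first.
- by rewrite size_take; case: ifP => _; lia.
- by rewrite size_take; case: ifP => _; lia.
by rewrite (IH m (drop j.+1 t)) // size_drop; lia.
Qed.

Lemma wick_fuel n s : (size s <= n)%N -> wick_rec n rho s = wick rho s.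
Proof. by move=> H; apply: wick_rec_fuel. Qed.

Lemma wick_odd s : odd (size s) -> wick rho s = 0.
Proof. exact: wick_rec_odd. Qed.

Lemma wick_cons x t : wick rho (x :: t) =
  \sum_(j < size t) rho (nth 0 t j - x) * wick rho (take j t) * wick rho (drop j.+1 t).
Proof.
rewrite [RHS](bigID (fun j : 'I_(size t) => ~~ odd j)) /=.
rewrite [X in _ + X]big1 ?addr0.
  rewrite /wick /=; apply: eq_bigr => j _; rewrite !wick_fuel //.
    by rewrite size_drop leq_subr.
  by rewrite size_take; case: ifP => // /ltnW.
move=> j /negPn Hj; rewrite (@wick_odd (take j t)) ?mulr0 ?mul0r //.
by rewrite size_take ltn_ord.
Qed.

Lemma wick_nil : wick rho [::] = 1.
Proof. by []. Qed.

End Wick.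

Section Mom.
Variable C : numClosedFieldType.
Variable rho : int -> C.
Hypothesis rho0 : rho 0 = 1.

Definition mu k := wick rho (nseq k 0).
Definition Dop (h : nat -> C) n := \sum_(l < n) h l * mu (n.-1 - l).

Lemma wick_const x k : wick rho (nseq k x) = mu k.
Proof.
elim/ltn_ind: k => -[|k] IH //.
rewrite /mu -[nseq k.+1 x]/(x :: nseq k x) -[nseq k.+1 0]/(0 :: nseq k 0).
rewrite !wick_cons !size_nseq; apply: eq_bigr => j _.
have jk := ltn_ord j.
rewrite !nth_nseq jk !subrr !take_nseq ?(ltnW jk) // !drop_nseq.
have H1 : (j < k.+1)%N by lia.
have H2 : (k - j.+1 < k.+1)%N by lia.
by rewrite (IH _ H1) (IH _ H2).
Qed.

Lemma mu0 : mu 0%N = 1. Proof. by []. Qed.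

Variable t : int.
Definition M a b := wick rho (nseq a 0 ++ nseq b t).

Lemma M_0l b : M 0%N b = mu b.
Proof. exact: wick_const. Qed.
Lemma M_0r a : M a 0%N = mu a.
Proof. by rewrite /M cats0. Qed.

Lemma M_rec a b : M a.+1 b = Dop (fun l => M l b) a + rho t * Dop (fun l => M a l) b.
Proof.
rewrite /M /= wick_cons size_cat !size_nseq big_split_ord /=; congr (_ + _).
  rewrite /Dop (reindex_inj rev_ord_inj) /=; apply: eq_bigr => j _.
  have ja := ltn_ord j.
  rewrite nth_cat size_nseq.
  have -> : (a - j.+1 < a)%N by lia.
  rewrite nth_nseq.
  have -> : (a - j.+1 < a)%N by lia.
  rewrite subrr rho0 mul1r take_cat size_nseq.
  have -> : (a - j.+1 < a)%N by lia.
  rewrite take_nseq; last by lia.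
  rewrite wick_const drop_cat size_nseq.
  case: ifP => H.
    rewrite drop_nseq mulrC; congr (_ * _).
      by congr (wick _ (nseq _ _ ++ _)); lia.
    by congr mu; lia.
  have -> : ((a - j.+1).+1 - a = 0)%N by lia.
  rewrite drop0 mulrC; congr (_ * _).
    by have -> : (j = 0 :> nat)%N by lia.
  by have -> : (a - j.+1 = a.-1 - j)%N by lia.
rewrite mulr_sumr; apply: eq_bigr => l _.
have lb := ltn_ord l.
rewrite nth_cat size_nseq.
have -> : (a + l < a)%N = false by lia.
rewrite nth_nseq.
have -> : (a + l - a < b)%N by lia.
rewrite subr0 take_cat size_nseq.
have -> : (a + l < a)%N = false by lia.
have -> : (a + l - a = l)%N by lia.
rewrite take_nseq; last by lia.
rewrite drop_cat size_nseq.
have -> : ((a + l).+1 < a)%N = false by lia.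
rewrite drop_nseq wick_const mulrA; congr (_ * _ * mu _); lia.
Qed.

Lemma mu_rec a : mu a.+1 = Dop mu a.
Proof.
rewrite -M_0r M_rec /Dop big_ord0 mulr0 addr0; apply: eq_bigr => l _.
by rewrite M_0r.
Qed.

End Mom.
Arguments mu {C}.
Arguments Dop {C}.
Arguments M {C}.
Arguments mu_rec {C rho}.
Arguments M_rec {C rho}.
Arguments wick_const {C}.
Lemma mu_recS {C : numClosedFieldType} {rho : int -> C} (rho0 : rho 0 = 1) a :
  mu rho a.+1 = Dop rho (mu rho) a.
Proof. exact: (mu_rec rho0 0). Qed.

Section Ev.
Variable C : numClosedFieldType.

Definition ev (p : {poly C}) (h : nat -> C) := \sum_(i < size p) p`_i * h i.

Lemma evE N (p : {poly C}) h : (size p <= N)%N -> ev p h = \sum_(i < N) p`_i * h i.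
Proof.
move=> HN; rewrite /ev (big_ord_widen _ (fun i => p`_i * h i) HN) big_mkcond /=.
apply: eq_bigr => i _; case: ifP => // /negbT; rewrite -leqNgt => Hi.
by rewrite nth_default ?mul0r.
Qed.

Lemma ev_ext p h g : (forall i, h i = g i) -> ev p h = ev p g.
Proof. by move=> H; apply: eq_bigr => i _; rewrite H. Qed.

Lemma evD p q h : ev (p + q) h = ev p h + ev q h.
Proof.
set N := maxn (size p) (size q).
rewrite (evE N) ?size_polyD // (evE N p) ?leq_maxl //.
rewrite (evE N q) ?leq_maxr // -big_split /=.
by apply: eq_bigr => i _; rewrite coefD mulrDl.
Qed.

Lemma evN p h : ev (- p) h = - ev p h.
Proof.
rewrite /ev size_polyN -sumrN; apply: eq_bigr => i _; by rewrite coefN mulNr.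
Qed.

Lemma evB p q h : ev (p - q) h = ev p h - ev q h.
Proof. by rewrite evD evN. Qed.

Lemma evZ a p h : ev (a *: p) h = a * ev p h.
Proof.
rewrite (evE (size p)) ?size_scale_leq // /ev mulr_sumr.
by apply: eq_bigr => i _; rewrite coefZ mulrA.
Qed.

Lemma ev0 h : ev 0 h = 0.
Proof. by rewrite /ev size_poly0 big_ord0. Qed.

Lemma ev_sum (I : Type) (r : seq I) (P : pred I) (F : I -> {poly C}) h :
  ev (\sum_(i <- r | P i) F i) h = \sum_(i <- r | P i) ev (F i) h.
Proof.
exact: (big_morph (fun p => ev p h) (fun p q => evD p q h) (ev0 h)).
Qed.

Lemma ev1 h : ev 1 h = h 0%N.
Proof. by rewrite /ev size_poly1 big_ord1 coef1 mul1r. Qed.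

Lemma evX p h : ev ('X * p) h = ev p (fun i => h i.+1).
Proof.
rewrite (evE (size p).+1); last first.
  by apply: leq_trans (size_polyMleq _ _) _; rewrite size_polyX.
rewrite big_ord_recl coefXM /= mul0r add0r; apply: eq_bigr => i _.
by rewrite coefXM.
Qed.

Lemma ev_lin p a h g : ev p (fun i => a * h i + g i) = a * ev p h + ev p g.
Proof.
rewrite /ev mulr_sumr -big_split /=; apply: eq_bigr => i _.
by rewrite mulrDr mulrCA.
Qed.

Lemma evDh p h g : ev p (fun i => h i + g i) = ev p h + ev p g.
Proof. by rewrite /ev -big_split /=; apply: eq_bigr => i _; rewrite mulrDr. Qed.

Lemma evMl p a h : ev p (fun i => a * h i) = a * ev p h.
Proof. by rewrite /ev mulr_sumr; apply: eq_bigr => i _; rewrite mulrCA. Qed.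

Lemma ev_sumh p n (F : nat -> nat -> C) :
  ev p (fun i => \sum_(l < n) F i l) = \sum_(l < n) ev p (fun i => F i l).
Proof.
rewrite /ev; under eq_bigr do rewrite mulr_sumr.
by rewrite exchange_big.
Qed.

Lemma ev_sumhs p (I : Type) (r : seq I) (P : pred I) (F : nat -> I -> C) :
  ev p (fun i => \sum_(l <- r | P l) F i l) = \sum_(l <- r | P l) ev p (fun i => F i l).
Proof.
rewrite /ev; under eq_bigr do rewrite mulr_sumr.
by rewrite exchange_big.
Qed.

Lemma ev_swap p q (G : nat -> nat -> C) :
  ev p (fun i => ev q (fun j => G i j)) = ev q (fun j => ev p (fun i => G i j)).
Proof.
rewrite /ev; under eq_bigr do rewrite mulr_sumr.
rewrite exchange_big; apply: eq_bigr => j _; rewrite mulr_sumr.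
by apply: eq_bigr => i _; rewrite !mulrA [p`_i * _]mulrC.
Qed.

Lemma ev_mulr p h a : ev p (fun i => h i * a) = ev p h * a.
Proof. by rewrite /ev mulr_suml; apply: eq_bigr => i _; rewrite mulrA. Qed.

Lemma chebU0 : chebU C 0%N = 1. Proof. by []. Qed.
Lemma chebU1 : chebU C 1%N = 'X. Proof. by []. Qed.
Lemma chebU_snd n : (chebU_pair C n).2 = chebU C n.+1.
Proof. by rewrite /chebU /=; case: (chebU_pair C n). Qed.
Lemma chebUSS n : chebU C n.+2 = 'X * chebU C n.+1 - chebU C n.
Proof.
rewrite -chebU_snd /chebU /=.
by case: (chebU_pair C n) => a b /=.
Qed.

End Ev.
Arguments ev {C}.
Arguments ev_ext {C}.
Arguments evE {C}.

Section Key.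
Variable C : numClosedFieldType.
Variable rho : int -> C.
Hypothesis rho0 : rho 0 = 1.
Local Notation mu := (mu rho).
Local Notation Dop := (Dop rho).
Local Notation U := (chebU C).

Lemma Dop0 h : Dop h 0%N = 0.
Proof. by rewrite /Dop big_ord0. Qed.

Lemma Dop_S h i : Dop h i.+1 = h 0%N * mu i + Dop (fun l => h l.+1) i.
Proof.
rewrite /Dop big_ord_recl /= subn0; congr (_ + _); apply: eq_bigr => l _.
by congr (_ * mu _); rewrite /bump /=; lia.
Qed.

Lemma evX_Dop p h : ev ('X * p) (Dop h) = h 0%N * ev p mu + ev p (Dop (fun l => h l.+1)).
Proof. by rewrite evX (ev_ext _ _ _ (fun i => Dop_S h i)) ev_lin. Qed.

Lemma evU0 h : ev (U 0%N) h = h 0%N.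
Proof. by rewrite chebU0 ev1. Qed.

Definition Pk n := (forall h, ev (U n.+1) (Dop h) = ev (U n) h) /\ ev (U n.+1) mu = 0.

Lemma mu1 : mu 1%N = 0.
Proof. by rewrite (mu_recS rho0) Dop0. Qed.

Lemma Pk_all n : Pk n /\ Pk n.+1.
Proof.
elim: n => [|n [[IH1 IH2] [IH3 IH4]]].
  have P0 : Pk 0%N.
    split.
      move=> h; rewrite chebU1 -[X in ev X _]mulr1 evX_Dop evU0.
      by rewrite -chebU0 !evU0 mu0 mulr1 (Dop0 (fun l => h l.+1)) addr0.
    by rewrite chebU1 -[X in ev X _]mulr1 evX -chebU0 evU0 mu1.
  split=> //; case: P0 => [H1 H2]; split.
    move=> h; rewrite chebUSS evB evX_Dop H2 mulr0 add0r H1 !evU0 (Dop0 h) subr0.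
    by rewrite chebU1 -[X in _ = ev X _]mulr1 evX evU0.
  rewrite chebUSS evB evX (ev_ext _ _ _ (fun i => mu_recS rho0 i)) H1 subrr //.
split=> //; split.
  move=> h; rewrite chebUSS evB evX_Dop IH4 mulr0 add0r IH3 IH1.
  by rewrite chebUSS evB evX.
by rewrite chebUSS evB evX (ev_ext _ _ _ (fun i => mu_recS rho0 i)) IH3 subrr.
Qed.

Lemma evU_Dop n h : ev (U n.+1) (Dop h) = ev (U n) h.
Proof. by case: (Pk_all n) => [[]]. Qed.
Lemma evU_mu n : ev (U n) mu = (n == 0%N)%:R.
Proof. case: n => [|n]; first by rewrite evU0 mu0. by case: (Pk_all n) => [[]]. Qed.
Lemma evU0_Dop h : ev (U 0%N) (Dop h) = 0.
Proof. by rewrite evU0 Dop0. Qed.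

Variable t : int.
Local Notation M := (M rho t).

Lemma evX_M p b : ev ('X * p) (fun i => M i b) =
  ev p (Dop (fun l => M l b)) + rho t * Dop (fun l => ev p (fun i => M i l)) b.
Proof.
rewrite evX (ev_ext _ _ _ (fun i => M_rec rho0 t i b)) evDh evMl; congr (_ + _ * _).
rewrite /Dop (ev_sumh _ p b (fun i l => M i l * mu (b.-1 - l))); apply: eq_bigr => l _; exact: ev_mulr.
Qed.

Definition F m b := ev (U m) (fun i => M i b).

Lemma F_rec m b : F m.+1 b = rho t * Dop (F m) b.
Proof.
case: m => [|m].
  rewrite /F chebU1 -[X in ev X _]mulr1 evX_M -chebU0 evU0 (Dop0 (fun l => M l b)) add0r.
  done.
rewrite /F chebUSS evB evX_M evU_Dop addrAC subrr add0r.
done.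
Qed.

Definition H m n := ev (U n) (F m).

Lemma H_val m n : H m n = (m == n)%:R * rho t ^+ m.
Proof.
elim: m n => [|m IH] n.
  rewrite /H /F expr0 mulr1 (ev_ext _ _ _ (fun j => evU0 (fun i => M i j))).
  rewrite (ev_ext _ _ _ (fun j => M_0l _ rho t j)) evU_mu.
  by rewrite eq_sym.
rewrite /H (ev_ext _ _ _ (fun j => F_rec m j)) evMl.
case: n => [|n]; first by rewrite (evU0_Dop (F m)) mulr0 mul0r.
by rewrite (evU_Dop n (F m)) -/(H m n) IH eqSS exprS mulrCA.
Qed.

Lemma bilin_cheb K (c : nat -> C) :
  let Up := \sum_(1 <= n < K.+1) c n *: U n in
  ev Up (fun i => ev Up (fun j => M i j)) = \sum_(1 <= m < K.+1) c m ^+ 2 * rho t ^+ m.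
Proof.
move=> Up.
rewrite ev_sum big_seq_cond [RHS]big_seq_cond; apply: eq_bigr => m /andP[Hm _]; rewrite evZ.
rewrite (ev_ext _ _ _ (fun i => ev_sum _ _ _ _ _ _)).
under ev_ext do under eq_bigr do rewrite evZ.
rewrite ev_sumhs.
under eq_bigr do rewrite evMl ev_swap -/(F m) -/(H m _) H_val.
rewrite (bigD1_seq m) //=; last exact: iota_uniq.
rewrite eqxx mul1r big1 ?addr0; first by rewrite mulrA expr2.
by move=> i Hi; rewrite eq_sym (negbTE Hi) mul0r mulr0.
Qed.

End Key.

Section Phi.
Variable C : numClosedFieldType.
Variable A : lalgType C.
Variable star : A -> A.
Variable phi : A -> C.
Hypothesis HS : star_prob_space star phi.

Lemma phi_lin a x y : phi (a *: x + y) = a * phi x + phi y.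
Proof. by case: HS => _ _ _ _ [H _ _ _]. Qed.

Lemma phi0 : phi 0 = 0.
Proof.
have := phi_lin 1 0 0; rewrite scaler0 addr0 mul1r => H.
by apply: (addrI (phi 0)); rewrite addr0 -H.
Qed.

Lemma phiD x y : phi (x + y) = phi x + phi y.
Proof. by have := phi_lin 1 x y; rewrite scale1r mul1r. Qed.

Lemma phiZ a x : phi (a *: x) = a * phi x.
Proof. by rewrite -[a *: x]addr0 phi_lin phi0 addr0. Qed.

Lemma phi_sum (I : Type) (r : seq I) (P : pred I) (F : I -> A) :
  phi (\sum_(i <- r | P i) F i) = \sum_(i <- r | P i) phi (F i).
Proof. exact: (big_morph phi phiD phi0). Qed.

Lemma star_lin a x y : star (a *: x + y) = Num.conj a *: star x + star y.
Proof. by case: HS => H _ _ _ _. Qed.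

Lemma star0 : star 0 = 0.
Proof.
have := star_lin 1 0 0; rewrite scaler0 addr0 => H.
rewrite rmorph1 scale1r in H.
by apply: (addrI (star 0)); rewrite addr0 -H.
Qed.

Lemma starZ a x : star (a *: x) = Num.conj a *: star x.
Proof. by have := star_lin a x 0; rewrite !addr0 star0 addr0. Qed.

Lemma phi_rZ x b y : phi (x * (b *: y)) = b * phi (x * y).
Proof.
case: HS => _ Hm Hi _ [_ _ Hc _].
apply: (can_inj (@conjCK C)).
rewrite -Hc Hm starZ -scalerAl phiZ -Hm Hc rmorphM.
done.
Qed.

Lemma phi_pevalM (p q : {poly C}) (x y : A) :
  phi (peval p x * peval q y) = ev p (fun i => ev q (fun j => phi (x ^+ i * y ^+ j))).
Proof.
rewrite /peval mulr_suml phi_sum /ev; apply: eq_bigr => i _.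
rewrite mulr_sumr phi_sum mulr_sumr; apply: eq_bigr => j _.
by rewrite -scalerAl phiZ phi_rZ.
Qed.

End Phi.

Section Win.
Variable C : numClosedFieldType.

Definition W (N : nat) (g : int -> C) := \sum_(i < (N.*2).+1) g (i%:Z - N%:Z).

Lemma W_S N g : W N.+1 g = g (- (N.+1)%:Z) + W N g + g (N.+1)%:Z.
Proof.
rewrite /W doubleS big_ord_recl big_ord_recr /= -addrA; congr (_ + (_ + _)).
- by congr g; lia.
- by apply: eq_bigr => i _; congr g; rewrite /bump /=; lia.
- by congr g; rewrite /bump /= -addnn; lia.
Qed.

Lemma W_ge0 N g : (forall t, 0 <= g t) -> 0 <= W N g.
Proof. by move=> H; apply: sumr_ge0 => i _. Qed.

Lemma W_mono N k g : (forall t, 0 <= g t) -> W N g <= W (N + k) g.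
Proof.
move=> H; elim: k => [|k IH]; first by rewrite addn0.
rewrite addnS W_S; apply: le_trans IH _.
by rewrite -addrA addrCA lerDl addr_ge0.
Qed.

Lemma W_stable N1 k g : (forall t, (N1 < `|t|)%N -> g t = 0) -> W (N1 + k) g = W N1 g.
Proof.
move=> H; elim: k => [|k IH]; first by rewrite addn0.
rewrite addnS W_S IH !H ?addr0 ?add0r //; lia.
Qed.

Lemma W_bound N N1 g : (forall t, 0 <= g t) -> (forall t, (N1 < `|t|)%N -> g t = 0) ->
  W N g <= W N1 g.
Proof.
move=> H0 H; case: (leqP N N1) => HN.
  by rewrite -(subnKC HN) W_mono.
by rewrite -(subnKC (ltnW HN)) W_stable.
Qed.

Lemma W_le N f g : (forall t, f t <= g t) -> W N f <= W N g.
Proof. by move=> H; apply: ler_sum => i _. Qed.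

Lemma W_lin N a f g : W N (fun t => a * f t + g t) = a * W N f + W N g.
Proof. by rewrite /W big_split /= mulr_sumr. Qed.

Lemma abs_summableE f : abs_summable_Z f <-> exists M, forall N, W N (fun n => `|f n|) <= M.
Proof. by []. Qed.

End Win.
Arguments W {C}.
Arguments W_le {C}.
Arguments W_bound {C}.
Arguments W_lin {C}.

Section Est.
Variable C : numClosedFieldType.
Variables (K kstar : nat) (c : nat -> C).
Hypothesis Hk : (kstar <= K)%N.

Definition Pz (z : C) := \sum_(kstar <= k < K.+1) c k ^+ 2 * z ^+ k.
Definition Sc := \sum_(kstar <= k < K.+1) `|c k| ^+ 2.
Definition Sc' := \sum_(kstar.+1 <= k < K.+1) `|c k| ^+ 2.

Lemma Sc'_ge0 : 0 <= Sc'.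
Proof. by apply: sumr_ge0 => i _; rewrite exprn_ge0. Qed.
Lemma Sc_ge0 : 0 <= Sc.
Proof. by apply: sumr_ge0 => i _; rewrite exprn_ge0. Qed.

Lemma Pz_upper z : `|z| <= 1 -> `|Pz z| <= Sc * `|z| ^+ kstar.
Proof.
move=> Hz; apply: le_trans (ler_norm_sum _ _ _) _.
rewrite /Sc mulr_suml big_nat_cond [X in _ <= X]big_nat_cond.
apply: ler_sum => k /andP[/andP[Hk1 _] _].
rewrite normrM !normrX; apply: ler_wpM2l; first by rewrite exprn_ge0.
exact: ler_wiXn2l.
Qed.

Lemma Pz_lower z : `|z| <= 1 -> Sc' * `|z| <= `|c kstar| ^+ 2 / 2 ->
  `|c kstar| ^+ 2 / 2 * `|z| ^+ kstar <= `|Pz z|.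
Proof.
move=> Hz HS.
rewrite /Pz big_ltn ?ltnS //.
apply: le_trans (lerB_normD _ _).
set e := `|c kstar| ^+ 2.
have Ha : `|c kstar ^+ 2 * z ^+ kstar| = e * `|z| ^+ kstar by rewrite normrM !normrX.
have Hb : `|\sum_(kstar.+1 <= k < K.+1) c k ^+ 2 * z ^+ k| <= e / 2 * `|z| ^+ kstar.
  apply: le_trans (ler_norm_sum _ _ _) _.
  apply: (@le_trans _ _ (Sc' * `|z| ^+ kstar.+1)).
    rewrite /Sc' mulr_suml big_nat_cond [X in _ <= X]big_nat_cond.
    apply: ler_sum => k /andP[/andP[Hk1 _] _].
    rewrite normrM !normrX; apply: ler_wpM2l; first by rewrite exprn_ge0.
    exact: ler_wiXn2l.
  rewrite exprS mulrA; apply: ler_wpM2r => //; exact: exprn_ge0.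
rewrite Ha.
have -> : e * `|z| ^+ kstar = e / 2 * `|z| ^+ kstar + e / 2 * `|z| ^+ kstar.
  by rewrite -mulrDl -splitr.
by rewrite -addrA lerDl subr_ge0.
Qed.

End Est.
Arguments Pz {C}.
Arguments Sc {C}.
Arguments Sc' {C}.
Arguments Pz_upper {C K kstar c}.
Arguments Pz_lower {C K kstar c}.
Arguments Sc_ge0 {C}.
Arguments Sc'_ge0 {C}.

Lemma prod_nseq (C : numClosedFieldType) (A : lalgType C) (X : int -> A) a n :
  \prod_(k <- nseq n a) X k = X a ^+ n.
Proof. by elim: n => [|n IH]; rewrite ?big_nil ?expr0 // big_cons IH exprS. Qed.

Theorem lemma4p3 (C : numClosedFieldType) (A : lalgType C) (star : A -> A)
    (phi : A -> C) (X : int -> A) (rho : int -> C)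
    (K : nat) (c : nat -> C) (kstar : nat) :
  star_prob_space star phi ->
  stationary_std_semicircular star phi X rho ->
  vanishes_at_infty rho ->
  (forall n, c n \is Num.real) ->
  c 0%N = 0 ->
  (1 <= kstar <= K)%N -> c kstar != 0 -> (forall k, (k < kstar)%N -> c k = 0) ->
  let U := \sum_(1 <= n < K.+1) c n *: chebU C n in
  let rhoU := fun t : int => phi (peval U (X 0) * peval U (X t)) in
  (forall t : int, rhoU t = \sum_(kstar <= k < K.+1) c k ^+ 2 * rho t ^+ k)
  /\ (abs_summable_Z rhoU <-> abs_summable_Z (fun n => `|rho n| ^+ kstar)).
Proof.
move=> HS [Hself rho0 Hw] Hvan Hreal Hc0 /andP[Hk1 HkK] Hck Hlt U rhoU.
have Hr : forall t, rhoU t = Pz K kstar c (rho t).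
  move=> t; rewrite /rhoU (phi_pevalM _ _ _ _ HS).
  have Hm : forall i j, phi (X 0 ^+ i * X t ^+ j) = M rho t i j.
    by move=> i j; rewrite /M -Hw big_cat /= !prod_nseq.
  rewrite (ev_ext U _ _ (fun i => ev_ext U _ _ (Hm i))) bilin_cheb //.

  rewrite (@big_cat_nat _ _ _ kstar 1 K.+1) //; last by lia.
  rewrite /= big_nat_cond big1 ?add0r // => m /andP[/andP[_ Hm'] _].
  by rewrite Hlt // expr2 !mul0r.
split => [t|]; first by rewrite Hr.
have [N0 HN0] := Hvan 1 ltr01.
have Habs : forall t, `| `|rho t| ^+ kstar | = `|rho t| ^+ kstar.
  by move=> t; rewrite ger0_norm // exprn_ge0.
rewrite !abs_summableE; split => -[Mb HMb].
  set e := `|c kstar| ^+ 2.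
  have e_gt0 : 0 < e by rewrite exprn_gt0 // normr_gt0.
  have S1 : 0 < Sc' K kstar c + 1 by rewrite ltr_wpDl // Sc'_ge0.
  set d := e / 2 / (Sc' K kstar c + 1).
  have d_gt0 : 0 < d by rewrite divr_gt0 // divr_gt0 // ltr0n.
  have [N2 HN2] := Hvan d d_gt0.
  set N1 := maxn N0 N2.
  pose g t := if (`|t| <= N1)%N then `|rho t| ^+ kstar else 0.
  have g_ge0 : forall t, 0 <= g t.
    by move=> t; rewrite /g; case: ifP => _ //; rewrite exprn_ge0.
  have g_van : forall t, (N1 < `|t|)%N -> g t = 0.
    by move=> t Ht; rewrite /g leqNgt Ht.
  exists (2 / e * Mb + W N1 g) => N.
  have Hpt : forall t, `| `|rho t| ^+ kstar | <= 2 / e * `|rhoU t| + g t.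
    move=> t; rewrite Habs /g; case: ifP => Ht.
      by rewrite lerDr mulr_ge0 // divr_ge0 // ltW.
    have Ht0 : (N0 < `|t|)%N by lia.
    have Ht2 : (N2 < `|t|)%N by lia.
    have Hx1 := ltW (HN0 t Ht0).
    have Hxd := HN2 t Ht2.
    rewrite addr0 Hr.
    have HS' : Sc' K kstar c * `|rho t| <= e / 2.
      apply: (@le_trans _ _ (Sc' K kstar c * d)).
        by apply: ler_wpM2l; [exact: Sc'_ge0 | exact: ltW].
      apply: (@le_trans _ _ ((Sc' K kstar c + 1) * d)).
        by apply: ler_wpM2r; [exact: ltW | rewrite lerDl ler01].
      by rewrite /d mulrC divfK // gt_eqF.
    have := Pz_lower HkK (rho t) Hx1 HS'.
    move=> /(ler_wpM2l (x := 2 / e)) H.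
    have H' := H (divr_ge0 (ler0n _ 2) (ltW e_gt0)).
    apply: le_trans H'; rewrite le_eqVlt; apply/orP; left; apply/eqP.
    have en0 : e != 0 by rewrite gt_eqF.
    by rewrite -/e; field.
  apply: le_trans (W_le N _ _ Hpt) _.
  rewrite W_lin; apply: lerD; last exact: W_bound.
  by apply: ler_wpM2l => //; rewrite divr_ge0 // ltW.
pose g t := if (`|t| <= N0)%N then `|rhoU t| else 0.
have g_ge0 : forall t, 0 <= g t.
  by move=> t; rewrite /g; case: ifP => _ //.
have g_van : forall t, (N0 < `|t|)%N -> g t = 0.
  by move=> t Ht; rewrite /g leqNgt Ht.
exists (Sc K kstar c * Mb + W N0 g) => N.
have Hpt : forall t, `|rhoU t| <= Sc K kstar c * `| `|rho t| ^+ kstar | + g t.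
  move=> t; rewrite Habs /g; case: ifP => Ht.
    by rewrite lerDr mulr_ge0 // ?Sc_ge0 // exprn_ge0.
  have Ht0 : (N0 < `|t|)%N by lia.
  rewrite addr0 Hr; apply: Pz_upper => //; exact: ltW (HN0 t Ht0).
apply: le_trans (W_le N _ _ Hpt) _.
rewrite W_lin; apply: lerD; last exact: W_bound.
by apply: ler_wpM2l => //; exact: Sc_ge0.
Qed.
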